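(* Let $\mathcal{T} = \{\tau_1, \ldots, \tau_{i-1}, \tau_i\}$ be a set of tasks scheduled by preemptive fixed-priority scheduling on a single processor, ordered by decreasing priority ($\tau_1$ highest), where each task $\tau_j$ has worst-case computation time $C_j$, period (minimum inter-arrival time) $T_j$ and relative deadline $D_j$ (possibly $D_j > T_j$), with zero jitter. Let $H_i = \mathrm{lcm}(T_1, \ldots, T_i)$ and $h_i = H_i / T_i$. For $h \geq 1$, let $\mathcal{T}^{(h)}$ be the task set obtained from $\mathcal{T}$ by replacing $\tau_i$ with a task $\tau_i^{(h)}$ having computation time $C_i^{(h)} = h C_i$, deadline $D_i^{(h)} = (h-1) T_i + D_i$, the same period $T_i$ and the same priority as $\tau_i$. If for every $h = 1, \ldots, h_i$ the task $\tau_i^{(h)}$ completes before its deadline when scheduled in $\mathcal{T}^{(h)}$, then the first $h_i$ jobs of $\tau_i$ (scheduled in $\mathcal{T}$) also complete before their deadlines.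
   Context: A task $\tau_j$ releases an infinite sequence of jobs; the $k$-th job is activated at $a_{j,k}$, consecutive activations being separated by (at least) $T_j$, executes for at most $C_j$ time units and must finish by $a_{j,k} + D_j$. Under preemptive fixed-priority scheduling, at any time the processor executes the pending job of highest priority, and jobs of a task are executed in activation order (a job cannot start before the previous job of the same task has completed). *)

(* Defs.v *)
From mathcomp Require Import all_boot.
Set Implicit Arguments. Unset Strict Implicit. Unset Printing Implicit Defensive.

Record task := Task { C : nat; T : nat; D : nat }.

Definition dflt_task : task := Task 0 1 0.

(* Work of a task released in the time window [0, t] in the synchronous
   periodic scenario with zero jitter: jobs k = 0,1,... are activated at
   k * T, each requiring exactly C time units. *)
Definition released_work (tk : task) (t : nat) : nat := (t %/ T tk).+1 * C tk.

(* Preemptive fixed-priority schedule of the task set [ts] (index 0 = highest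
   priority) on one processor, in unit time slots [t, t+1).
   [service ts t j] = amount of processing received by task j in [0, t).
   Since jobs of a task run in activation order, this cumulative service
   determines the state of every job: job k of task j has completed by time t
   iff (k+1) * C_j <= service ts t j.  In slot t the processor runs the
   highest-priority task that has pending (released, unfinished) work. *)
Fixpoint service (ts : seq task) (t : nat) : nat -> nat :=
  match t with
  | 0 => fun _ => 0
  | t'.+1 =>
      let s := service ts t' in
      let sel := find (fun j => s j < released_work (nth dflt_task ts j) t')
                      (iota 0 (size ts)) in
      fun j => s j + (j == sel)
  end.

(* Job k (0-based: activated at k*T_j) of task j completes by its absolute
   deadline k*T_j + D_j. *)
Definition job_meets_deadline (ts : seq task) (j k : nat) : bool :=
  let tk := nth dflt_task ts j in
  k.+1 * C tk <= service ts (k * T tk + D tk) j.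

Definition hyperperiod (ts : seq task) : nat := \big[lcmn/1]_(tk <- ts) T tk.

Definition scale_task (h : nat) (tk : task) : task :=
  Task (h * C tk) (T tk) ((h - 1) * T tk + D tk).

(* Main.v *)
Require Import Defs.
From mathcomp Require Import all_boot zify.

Definition pend (ts : seq task) t j :=
  service ts t j < released_work (nth dflt_task ts j) t.

Lemma serviceS ts t j : service ts t.+1 j =
  service ts t j + (j == find (pend ts t) (iota 0 (size ts))).
Proof. by []. Qed.

Lemma find_iota_eq (p : pred nat) N j : j < N ->
  (j == find p (iota 0 N)) = p j && ~~ has p (iota 0 j).
Proof.
move=> lt; have -> : N = j + (N - j - 1).+1 by lia.
rewrite iotaD find_cat /= add0n size_iota.
case: (boolP (has p (iota 0 j))) => hp.
  have h := has_find p (iota 0 j); rewrite hp size_iota in h.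
  rewrite andbF; apply/negbTE; lia.
rewrite andbT; case: (p j); first by rewrite addn0 eqxx.
apply/negbTE; lia.
Qed.

Lemma find_lt_has (p : pred nat) n :
  (find p (iota 0 n.+1) < n) = has p (iota 0 n).
Proof.
rewrite -[n.+1]addn1 iotaD find_cat size_iota.
case: (boolP (has p (iota 0 n))) => hp.
  by have := has_find p (iota 0 n); rewrite hp size_iota => ->.
apply/negbTE; lia.
Qed.

Lemma sum_eq_ind (m n : nat) : \sum_(j < n) ((j : nat) == m : nat) = (m < n).
Proof.
elim: n => [|n IH]; first by rewrite big_ord0.
rewrite big_ord_recr /= IH; case: (ltngtP m n) => h.
- lia.
- lia.
- lia.
Qed.

Lemma divsub x y T : 0 < T -> (x+y+1) %/ T <= x %/ T + y %/ T + 1.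
Proof. move=> T0. have hx := ltn_ceil x T0. have hy := ltn_ceil y T0.
rewrite -ltnS ltn_divLR //. move: hx hy; generalize (x %/ T) (y %/ T) => a b. nia. Qed.

Lemma rw_mono tk t t' : t <= t' -> released_work tk t <= released_work tk t'.
Proof. move=> h; rewrite /released_work leq_mul2r ltnS leq_div2r ?orbT //. Qed.

Lemma serv_le ts t j : j < size ts ->
  service ts t j <= released_work (nth dflt_task ts j) t.
Proof.
move=> jlt; elim: t => [|t IH] /=; first by [].
rewrite -/(service ts t.+1 j) serviceS find_iota_eq //.
case: (boolP (pend ts t j)) => /= hp; rewrite /=.
  apply: leq_trans (leq_add (leqnn _) (leq_b1 _)) _; rewrite addn1.
  rewrite /pend in hp; have := @rw_mono (nth dflt_task ts j) t t.+1 (leqnSn t); lia.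
rewrite /= addn0; exact: leq_trans IH (@rw_mono _ t t.+1 (leqnSn _)).
Qed.

Lemma nth_hp hp x j : j < size hp -> nth dflt_task (rcons hp x) j = nth dflt_task hp j.
Proof. by move=> h; rewrite nth_rcons h. Qed.

Lemma hp_same hp x y t j : j < size hp ->
  service (rcons hp x) t j = service (rcons hp y) t j.
Proof.
elim: t j => [//|t IH] j jlt.
have pe : forall j', j' < size hp -> pend (rcons hp x) t j' = pend (rcons hp y) t j'.
  by move=> j' h; rewrite /pend !nth_hp // IH.
rewrite !serviceS !find_iota_eq ?size_rcons ?(ltn_trans jlt (ltnSn _)) // IH // pe //.
congr (_ + (_ && ~~ _)); apply: eq_in_has => j'; rewrite mem_iota add0n => /andP[_ h].
exact: pe (ltn_trans h jlt).
Qed.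

Definition W hp x t := \sum_(j < size hp) service (rcons hp x) t j.
Definition A hp t := \sum_(j < size hp) released_work (nth dflt_task hp j) t.
Definition hasp hp x t := has (pend (rcons hp x) t) (iota 0 (size hp)).

Lemma W_S hp x t : W hp x t.+1 = W hp x t + hasp hp x t.
Proof.
rewrite /W; under eq_bigr do rewrite serviceS.
by rewrite big_split /= sum_eq_ind size_rcons find_lt_has.
Qed.

Lemma hasp_lt hp x t : hasp hp x t = (W hp x t < A hp t).
Proof.
rewrite /W /A; case: (boolP (hasp hp x t)) => h.
  move/hasP: h => [j]; rewrite mem_iota add0n => /andP[_ jlt] hpj.
  rewrite (bigD1 (Ordinal jlt)) //= [X in _ < X](bigD1 (Ordinal jlt)) //=.
  have : \sum_(i < size hp | i != Ordinal jlt) service (rcons hp x) t i <=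
    \sum_(i < size hp | i != Ordinal jlt) released_work (nth dflt_task hp i) t.
    apply: leq_sum => i _; rewrite -(@nth_hp hp x) //.
    by apply: serv_le; rewrite size_rcons ltnS ltnW.
  move: hpj; rewrite /pend nth_hp // => h1 h2; apply/esym; rewrite -addSn; exact: leq_add.
apply/esym/negbTE; rewrite -leqNgt; apply: leq_sum => i _.
move/hasPn: h => /(_ i) H; rewrite leqNgt -(@nth_hp hp x) //; apply: H; by rewrite mem_iota add0n ltn_ord.
Qed.

Lemma low_S hp x t : service (rcons hp x) t.+1 (size hp) =
  service (rcons hp x) t (size hp) + (pend (rcons hp x) t (size hp) && ~~ hasp hp x t).
Proof. by rewrite serviceS find_iota_eq // size_rcons. Qed.

Definition G hp u := if u is u'.+1 then A hp u' else 0.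

Lemma W0 hp x : W hp x 0 = 0.
Proof. by rewrite /W big1. Qed.

Lemma W_leA hp x t : W hp x t <= A hp t.
Proof.
apply: leq_sum => i _; rewrite -(@nth_hp hp x) //.
by apply: serv_le; rewrite size_rcons ltnS ltnW.
Qed.

Lemma W_min hp x t : W hp x t.+1 = minn (A hp t) (W hp x t + 1).
Proof.
rewrite W_S hasp_lt; have := W_leA hp x t.
move=> h0; case: (ltnP (W hp x t) (A hp t)) => h /=; lia.
Qed.

Lemma W_ub hp x t u : u <= t -> W hp x t <= G hp u + (t - u).
Proof.
elim: t u => [|t IH] u hu.
  by rewrite W0.
rewrite W_min; case: (ltnP t u) => h.
  have -> : u = t.+1 by lia.
  rewrite /= subnn addn0; exact: geq_minl.
have := IH u h; lia.
Qed.

Lemma W_ex hp x t : exists2 u, u <= t & W hp x t = G hp u + (t - u).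
Proof.
elim: t => [|t [u hu IH]]; first by exists 0; rewrite // W0.
rewrite W_min; case: (leqP (A hp t) (W hp x t + 1)) => h.
  by exists t.+1 => //=; lia.
exists u; first lia. lia.
Qed.

Lemma A_sub hp x y : all (fun tk => 0 < T tk) hp ->
  A hp (x + y + 1) <= A hp x + A hp y.
Proof.
move=> /(all_nthP dflt_task) hT; rewrite /A -big_split; apply: leq_sum => i _ /=.
rewrite /released_work -mulnDl leq_mul2r; apply/orP; right.
have : 0 < T (nth dflt_task hp i) by apply: hT.
move/(divsub x y); lia.
Qed.

Lemma G_sub hp a b : all (fun tk => 0 < T tk) hp -> G hp (a + b) <= G hp a + G hp b.
Proof.
move=> hT; case: a => [|a]; first by [].
case: b => [|b]; first by rewrite addn0 /= addn0.
have -> : a.+1 + b.+1 = (a + b + 1).+1 by lia.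
exact: A_sub.
Qed.

Lemma W_sub hp x a b : all (fun tk => 0 < T tk) hp ->
  W hp x (a + b) <= W hp x a + W hp x b.
Proof.
move=> hT; have [u hu Eu] := W_ex hp x a; have [v hv Ev] := W_ex hp x b.
have := W_ub hp x (a + b) (u + v) (leq_add hu hv); rewrite Eu Ev.
have := G_sub hp u v hT. lia.
Qed.

Definition idl hp x t := t - W hp x t.

Lemma W_let hp x t : W hp x t <= t.
Proof. by have := W_ub hp x t 0 (leq0n t); rewrite subn0. Qed.

Lemma idl_S hp x t : idl hp x t.+1 = idl hp x t + ~~ hasp hp x t.
Proof.
rewrite /idl W_S; have := W_let hp x t.+1; rewrite W_S.
have := W_let hp x t; case: (hasp hp x t) => /=; lia.
Qed.

Lemma idl_mono hp x u t : u <= t -> idl hp x u <= idl hp x t.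
Proof.
elim: t => [|t IH] h; first by rewrite leqn0 in h; rewrite (eqP h).
case: (ltnP t u) => h'.
  by have -> : u = t.+1 by lia.
rewrite idl_S; exact: leq_trans (IH h') (leq_addr _ _).
Qed.

Lemma nth_lastT hp x : nth dflt_task (rcons hp x) (size hp) = x.
Proof. by rewrite nth_rcons ltnn eqxx. Qed.

Lemma s_le_idl hp x t : service (rcons hp x) t (size hp) <= idl hp x t.
Proof.
elim: t => [|t IH]; first by [].
rewrite low_S idl_S.
case: (pend _ _ _) (hasp hp x t) => [] [] /=; lia.
Qed.

Definition Gi (x : task) u := if u is u'.+1 then released_work x u' else 0.

Lemma s_ex hp x t : exists2 u, u <= t &
  service (rcons hp x) t (size hp) = Gi x u + (idl hp x t - idl hp x u).
Proof.
elim: t => [|t [u hu IH]]; first by exists 0.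
have mu := idl_mono hp x u t hu.
have sle := @serv_le (rcons hp x) t (size hp); rewrite size_rcons ltnSn nth_lastT in sle.
rewrite low_S idl_S; case: (boolP (hasp hp x t)) => hh /=.
  by exists u; [lia | rewrite andbF; lia].
rewrite andbT; case: (boolP (pend _ _ _)) => hpn /=.
  by exists u; lia.
exists t.+1 => //=; rewrite idl_S (negbTE hh) /=.
move: hpn; rewrite /pend nth_lastT -leqNgt => hpn. have := sle isT. lia.
Qed.

Lemma W_same hp x y t : W hp x t = W hp y t.
Proof. by apply: eq_bigr => i _; apply: hp_same. Qed.

Lemma idl_same hp x y t : idl hp x t = idl hp y t.
Proof. by rewrite /idl (W_same hp x y). Qed.

Theorem lemma1 (hp : seq task) (ti : task) :
  all (fun tk => 0 < T tk) (rcons hp ti) ->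
  (forall h, 1 <= h <= hyperperiod (rcons hp ti) %/ T ti ->
     job_meets_deadline (rcons hp (scale_task h ti)) (size hp) 0) ->
  forall k, k < hyperperiod (rcons hp ti) %/ T ti ->
     job_meets_deadline (rcons hp ti) (size hp) k.
Proof.
rewrite all_rcons => /andP[hTi hThp] hyp k hk.
have F : forall h, 1 <= h <= k.+1 -> h * C ti <= idl hp ti ((h - 1) * T ti + D ti).
  move=> h hh; have := hyp h (_ : 1 <= h <= _); rewrite /job_meets_deadline nth_lastT /=.
  rewrite mul1n add0n => H; have {}H := H ltac:(lia).
  apply: leq_trans H _; rewrite (idl_same hp ti (scale_task h ti)); exact: s_le_idl.
rewrite /job_meets_deadline nth_lastT.
set t := k * T ti + D ti.
have [u hu ->] := s_ex hp ti t.
case: u hu => [|u'] hu /=.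
  have := F k.+1 ltac:(lia); rewrite subSS subn0 -/t /idl W0 => H; lia.
have hc := ltn_ceil u' hTi; set j := u' %/ T ti in hc *.
case: (leqP k j) => hkj.
  rewrite /released_work -/j; apply: leq_trans (leq_addr _ _); by rewrite leq_mul2r ltnS hkj orbT.
set L := (k - j - 1) * T ti + D ti.
have := F (k - j) ltac:(lia); rewrite -/L => HF.
have e : j.+1 * T ti + (k - j - 1) * T ti = k * T ti by rewrite -mulnDl; congr (_ * _); lia.
have ult : u'.+1 + L <= t by rewrite /L /t; lia.
have m1 := idl_mono hp ti _ _ ult.
have sub := W_sub hp ti u'.+1 L hThp.
have w1 := W_let hp ti u'.+1. have w2 := W_let hp ti L. have w3 := W_let hp ti (u'.+1 + L).
have ec : j.+1 * C ti + (k - j) * C ti = k.+1 * C ti by rewrite -mulnDl; congr (_ * _); lia.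
move: m1 HF; rewrite /idl /released_work -/j. lia.
Qed.
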